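(* Let $f: G\twoheadrightarrow H$ be a surjection of finite groups and let $r\in\mathbb{Z}$ be coprime to $|G|$. Then $\mathbb{Z}H\otimes_{\mathbb{Z}G}(I_G,r)\cong (I_H,r)$ as $\mathbb{Z}H$-modules.
   Context: For a finite group $G$, $I_G$ is the augmentation ideal of $\mathbb{Z}G$ and $(I_G,r)$ is the ideal of $\mathbb{Z}G$ generated by $I_G$ and $r$. $\mathbb{Z}H$ is a right $\mathbb{Z}G$-module via $f$. *)

(* Defs.v *)
From HB Require Import structures.
From mathcomp Require Import all_boot all_order all_algebra all_fingroup.
Set Implicit Arguments. Unset Strict Implicit. Unset Printing Implicit Defensive.
Import GRing.Theory.
Local Open Scope ring_scope.

(* The integral group ring ZG of a finite group gT, as the additive group of
   integer-valued functions on gT: a : ZG gT stands for \sum_x a x * x. *)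
Notation ZG gT := {ffun gT -> int}.

(* Left multiplication by a group element g:  g * (\sum_x a_x x) = \sum_x a_x (g x). *)
Definition gl (gT : finGroupType) (g : gT) (a : ZG gT) : ZG gT :=
  [ffun y => a (g^-1 * y)%g].

(* Right multiplication by a group element g:  (\sum_x a_x x) * g = \sum_x a_x (x g). *)
Definition gr (gT : finGroupType) (a : ZG gT) (g : gT) : ZG gT :=
  [ffun y => a (y * g^-1)%g].

Definition augI (gT : finGroupType) (a : ZG gT) : Prop := \sum_(x : gT) a x = 0.

(* The (two-sided) ideal (I_G, r) generated by I_G and r; since I_G is an ideal
   and r is central, it equals I_G + r ZG. *)
Definition augIr (gT : finGroupType) (r : int) (a : ZG gT) : Prop :=
  exists i b : ZG gT, augI i /\ a = i + b *~ r.

(* beta : ZH x (I_G,r) -> A is biadditive and ZG-balanced, where ZH is a right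
   ZG-module via f (a . g = a * f g) and (I_G,r) is a left ZG-module (left
   multiplication).  Being balanced for the generators g in G, together with
   biadditivity, is equivalent to being ZG-balanced. *)
Definition balanced (gT hT : finGroupType) (f : gT -> hT) (r : int)
  (A : zmodType) (beta : ZG hT -> ZG gT -> A) : Prop :=
  [/\ forall a a' x, augIr r x -> beta (a + a') x = beta a x + beta a' x,
      forall a x x', augIr r x -> augIr r x' -> beta a (x + x') = beta a x + beta a x'
    & forall a g x, augIr r x -> beta (gr a (f g)) x = beta a (gl g x)].

(* (T, act, beta) is the tensor product ZH \otimes_{ZG} (I_G,r), with its left
   ZH-module structure: beta is the universal balanced map, and the action of
   h in H on T is additive and satisfies h . beta(a, x) = beta(h a, x). *)
Definition is_tensor_ZH_Ir (gT hT : finGroupType) (f : gT -> hT) (r : int)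
  (T : zmodType) (act : hT -> T -> T) (beta : ZG hT -> ZG gT -> T) : Prop :=
  [/\ balanced f r beta,
      forall h, {morph act h : u v / u + v},
      forall h a x, augIr r x -> beta (gl h a) x = act h (beta a x)
    & forall (A : zmodType) (b : ZG hT -> ZG gT -> A), balanced f r b ->
        exists phi : T -> A,
          [/\ {morph phi : u v / u + v},
              forall a x, augIr r x -> phi (beta a x) = b a x
            & forall psi : T -> A, {morph psi : u v / u + v} ->
                (forall a x, augIr r x -> psi (beta a x) = b a x) -> psi =1 phi]].

(* Main.v *)
Require Import Defs.
From HB Require Import structures.
From mathcomp Require Import all_boot all_order all_algebra all_fingroup.
From mathcomp Require Import cyclic.
Import GRing.Theory.
Local Open Scope ring_scope.
Set Implicit Arguments. Unset Strict Implicit. Unset Printing Implicit Defensive.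

Definition dl (gT : finGroupType) (g : gT) : ZG gT := [ffun x => (x == g)%:R].
Definition aug (gT : finGroupType) (a : ZG gT) : int := \sum_x a x.
Definition Jb (gT : finGroupType) (r : int) : {pred ZG gT} :=
  [pred y | (r %| aug y)%Z].

Lemma aug_is_zmod (gT : finGroupType) : zmod_morphism (@aug gT).
Proof.
by move=> a b; rewrite /aug -sumrB; apply: eq_bigr => x _; rewrite !ffunE.
Qed.
HB.instance Definition _ gT := GRing.isZmodMorphism.Build _ _ (@aug gT) (@aug_is_zmod gT).

Lemma gl_is_zmod (gT : finGroupType) (g : gT) : zmod_morphism (gl g).
Proof. by move=> a b; apply/ffunP => x; rewrite !ffunE. Qed.
HB.instance Definition _ gT g := GRing.isZmodMorphism.Build _ _ (@gl gT g) (@gl_is_zmod gT g).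

Lemma aug_dl (gT : finGroupType) (g : gT) : aug (dl g) = 1.
Proof.
rewrite /aug (bigD1 g) //= ffunE eqxx big1 ?addr0 // => x /negbTE.
by rewrite ffunE => ->.
Qed.

Lemma Jb_zmod (gT : finGroupType) r : zmod_closed (@Jb gT r).
Proof.
split=> [|a b]; rewrite !inE ?raddf0 ?dvdz0 // => Ha Hb.
by rewrite raddfB rpredB.
Qed.
HB.instance Definition _ gT r := GRing.isZmodClosed.Build _ (@Jb gT r) (@Jb_zmod gT r).

Lemma augIrE (gT : finGroupType) r (a : ZG gT) : augIr r a <-> a \in Jb r.
Proof.
split.
  move=> [i [b [Hi ->]]]; have Hi' : aug i = 0 := Hi.
  rewrite inE raddfD raddfMz /= Hi'.
  by rewrite add0r mulrzz dvdz_mull.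
rewrite inE => /dvdzP [k Hk].
exists (a - dl 1%g *~ k *~ r), (dl 1%g *~ k); split; last by rewrite subrK.
rewrite /augI -/(aug _) raddfB !raddfMz /= aug_dl Hk.
by rewrite -mulrzA mulrzz mulN1r addrN.
Qed.

Record JT (hT : finGroupType) (r : int) := MkJT { jval : ZG hT; _ : jval \in Jb r }.
HB.instance Definition _ hT r := [isSub for @jval hT r].
HB.instance Definition _ hT r := [Choice of JT hT r by <:].
HB.instance Definition _ hT r := [SubChoice_isSubZmodule of JT hT r by <:].

Lemma jvalD hT r (u v : JT hT r) : \val (u + v) = \val u + \val v.
Proof. by []. Qed.

Definition pf (gT hT : finGroupType) (f : gT -> hT) (x : ZG gT) : ZG hT :=
  [ffun h => \sum_(g | f g == h) x g].
Definition cmul (hT : finGroupType) (a y : ZG hT) : ZG hT := \sum_h gl h y *~ a h.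

Lemma pf_is_zmod (gT hT : finGroupType) (f : gT -> hT) : zmod_morphism (pf f).
Proof.
by move=> a b; apply/ffunP => h; rewrite !ffunE -sumrB; apply: eq_bigr => g _; rewrite !ffunE.
Qed.
HB.instance Definition _ (gT hT : finGroupType) (f : gT -> hT) := GRing.isZmodMorphism.Build _ _ (@pf gT hT f) (@pf_is_zmod gT hT f).

Lemma cmul_is_zmod (hT : finGroupType) (a : ZG hT) : zmod_morphism (cmul a).
Proof.
by move=> y z; rewrite /cmul -sumrB; apply: eq_bigr => h _; rewrite raddfB mulrzBl.
Qed.
HB.instance Definition _ (hT : finGroupType) (a : ZG hT) := GRing.isZmodMorphism.Build _ _ (@cmul hT a) (@cmul_is_zmod hT a).

Lemma cmulDl (hT : finGroupType) (a a' y : ZG hT) : cmul (a + a') y = cmul a y + cmul a' y.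
Proof. by rewrite /cmul -big_split; apply: eq_bigr => h _; rewrite ffunE mulrzDr. Qed.

Lemma natbz (b : bool) (z : int) : (b%:R : int) *~ z = if b then z else 0.
Proof. by case: b; rewrite ?intz ?mul0rz. Qed.

Lemma mulrzb (M : zmodType) (x : M) (b : bool) : x *~ (b%:R) = if b then x else 0.
Proof. by case: b; rewrite mulrz_nat ?mulr1n ?mulr0n. Qed.

Lemma aug_pf (gT hT : finGroupType) (f : gT -> hT) x : aug (pf f x) = aug x.
Proof.
rewrite /aug (partition_big f predT) //=; apply: eq_bigr => h _.
by rewrite ffunE.
Qed.

Lemma gl_gl (gT : finGroupType) (g g' : gT) x : gl g (gl g' x) = gl (g * g')%g x.
Proof. by apply/ffunP => y; rewrite !ffunE invMg mulgA. Qed.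

Lemma gl1 (gT : finGroupType) (x : ZG gT) : gl 1%g x = x.
Proof. by apply/ffunP => y; rewrite !ffunE invg1 mul1g. Qed.

Lemma gr1 (gT : finGroupType) (x : ZG gT) : gr x 1%g = x.
Proof. by apply/ffunP => y; rewrite !ffunE invg1 mulg1. Qed.

Lemma gl_dl (gT : finGroupType) (g u : gT) : gl g (dl u) = dl (g * u)%g.
Proof.
by apply/ffunP => y; rewrite !ffunE -(inj_eq (mulgI g)) mulKVg.
Qed.

Lemma gr_dl (gT : finGroupType) (g u : gT) : gr (dl u) g = dl (u * g)%g.
Proof.
by apply/ffunP => y; rewrite !ffunE -(inj_eq (mulIg g)) mulgKV.
Qed.

Lemma aug_gl (gT : finGroupType) (g : gT) x : aug (gl g x) = aug x.
Proof.
rewrite /aug (reindex_inj (mulgI g)) /=; apply: eq_bigr => y _.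
by rewrite ffunE mulKg.
Qed.

Lemma cmul_dl1 (hT : finGroupType) (y : ZG hT) : cmul (dl 1%g) y = y.
Proof.
rewrite /cmul (bigD1 1%g) //= ffunE eqxx mulrzb big1 ?addr0 ?gl1 // => h /negbTE.
by rewrite ffunE => ->; rewrite mulrzb.
Qed.

Lemma gl_cmul (hT : finGroupType) (h : hT) a y : gl h (cmul a y) = cmul (gl h a) y.
Proof.
rewrite /cmul raddf_sum [RHS](reindex_inj (mulgI h)) /=; apply: eq_bigr => h' _.
by rewrite raddfMz /= gl_gl ffunE mulKg.
Qed.

Lemma cmul_gr (hT : finGroupType) (k : hT) a y : cmul (gr a k) y = cmul a (gl k y).
Proof.
rewrite /cmul (reindex_inj (mulIg k)) /=; apply: eq_bigr => h' _.
by rewrite gl_gl ffunE mulgK.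
Qed.

Lemma aug_cmul (hT : finGroupType) (a y : ZG hT) : aug (cmul a y) = aug y * aug a.
Proof.
rewrite /cmul raddf_sum /aug mulr_sumr; apply: eq_bigr => h _.
by rewrite raddfMz /= aug_gl mulrzz.
Qed.

Lemma ffun_decomp (gT : finGroupType) (a : ZG gT) : a = \sum_g dl g *~ a g.
Proof.
apply/ffunP => y; rewrite sum_ffunE (bigD1 y) //= ffunMzE ffunE eqxx natbz.
by rewrite big1 ?addr0 // => g ne; rewrite ffunMzE ffunE eq_sym (negbTE ne) natbz.
Qed.

Section Gen.
Variables (V W : zmodType) (S : {pred V}) (Bf : V -> W).
Hypothesis S0 : 0 \in S.
Hypothesis SB : {in S &, forall u v, u - v \in S}.
Hypothesis BD : {in S &, forall u v, Bf (u + v) = Bf u + Bf v}.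

Lemma SN u : u \in S -> - u \in S.
Proof using S0 SB. by move=> Su; rewrite -sub0r SB. Qed.

Lemma SD u v : u \in S -> v \in S -> u + v \in S.
Proof using S0 SB. by move=> Su Sv; rewrite -[v]opprK SB // SN. Qed.

Lemma Smuln u n : u \in S -> u *+ n \in S.
Proof using S0 SB. by move=> Su; elim: n => [|n IH]; rewrite ?mulr0n // mulrS SD. Qed.

Lemma Smulz u z : u \in S -> u *~ z \in S.
Proof using S0 SB.
move=> Su; case: z => n; first by rewrite -pmulrn Smuln.
by rewrite NegzE mulrNz SN // -pmulrn Smuln.
Qed.

Lemma B0 : Bf 0 = 0.
Proof using S0 SB BD.
have := BD S0 S0; rewrite addr0 => H.
by apply: (addrI (Bf 0)); rewrite addr0 -H.
Qed.

Lemma BN u : u \in S -> Bf (- u) = - Bf u.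
Proof using S0 SB BD.
move=> Su; have := BD (SN Su) Su; rewrite addNr B0 => H.
by apply/eqP; rewrite -addr_eq0 -H.
Qed.

Lemma BB u v : u \in S -> v \in S -> Bf (u - v) = Bf u - Bf v.
Proof using S0 SB BD. by move=> Su Sv; rewrite BD ?SN // BN. Qed.

Lemma Bmuln u n : u \in S -> Bf (u *+ n) = Bf u *+ n.
Proof using S0 SB BD.
move=> Su; elim: n => [|n IH]; first by rewrite !mulr0n B0.
by rewrite !mulrS BD ?IH // Smuln.
Qed.

Lemma Bmulz u z : u \in S -> Bf (u *~ z) = Bf u *~ z.
Proof using S0 SB BD.
move=> Su; case: z => n; first by rewrite -!pmulrn Bmuln.
by rewrite !NegzE !mulrNz BN ?Smulz // -!pmulrn Bmuln.
Qed.

Lemma Bsum (I : finType) (F : I -> V) (c : I -> int) :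
  (forall i, F i \in S) -> Bf (\sum_i F i *~ c i) = \sum_i Bf (F i) *~ c i.
Proof using S0 SB BD.
move=> SF.
apply: (proj2 (@big_rec2 W V (fun y1 y2 => y2 \in S /\ Bf y2 = y1) 0 +%R 0 +%R
  (conj S0 B0) I (index_enum I) xpredT (fun i => Bf (F i) *~ c i) (fun i => F i *~ c i) _)).
move=> i y1 y2 _ [Sy2 <-]; split; first by rewrite SD ?Smulz.
by rewrite BD ?Smulz // Bmulz.
Qed.

End Gen.

Section Fib.
Variables (gT hT : finGroupType) (f : gT -> hT).
Hypothesis f_morph : {morph f : x y / (x * y)%g}.
Hypothesis f_surj : forall h : hT, exists g : gT, f g = h.

Definition sec (h : hT) : gT := odflt 1%g [pick g | f g == h].

Lemma sec_f h : f (sec h) = h.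
Proof.
rewrite /sec; case: pickP => [g /eqP //|H].
by have [g Hg] := f_surj h; move: (H g); rewrite Hg eqxx.
Qed.

Definition lift (y : ZG hT) : ZG gT :=
  [ffun g => if g == sec (f g) then y (f g) else 0].

Lemma lift_is_zmod : zmod_morphism lift.
Proof. by move=> a b; apply/ffunP => g; rewrite !ffunE; case: ifP => _; rewrite ?subr0 ?ffunE. Qed.
HB.instance Definition _ := GRing.isZmodMorphism.Build _ _ lift lift_is_zmod.

Lemma pf_lift y : pf f (lift y) = y.
Proof.
apply/ffunP => h; rewrite ffunE (bigD1 (sec h)) ?sec_f //= ffunE sec_f eqxx.
rewrite big1 ?addr0 // => g /andP [/eqP fg ne].
by rewrite ffunE fg (negbTE ne).
Qed.

Lemma aug_lift y : aug (lift y) = aug y.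
Proof. by rewrite -(aug_pf f) pf_lift. Qed.

Lemma lift_pf_decomp x : lift (pf f x) = \sum_g dl (sec (f g)) *~ x g.
Proof.
apply/ffunP => g0; rewrite sum_ffunE !ffunE.
rewrite [RHS](eq_bigr (fun g => if g0 == sec (f g) then x g else 0)); last first.
  by move=> g _; rewrite ffunMzE ffunE natbz.
rewrite -big_mkcond /=.
case: ifP => [/eqP e|ne].
  apply: eq_bigl => g; apply/eqP/eqP => [fg|->]; last by rewrite sec_f.
  by rewrite {1}e fg.
by rewrite big1 // => g /eqP e; move: ne; rewrite e sec_f eqxx.
Qed.

Lemma decomp x : x - lift (pf f x) = \sum_g (dl g - dl (sec (f g))) *~ x g.
Proof.
rewrite lift_pf_decomp {1}(ffun_decomp x) -sumrB.
by apply: eq_bigr => g _; rewrite mulrzBl.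
Qed.

Lemma pf_gl g x : pf f (gl g x) = gl (f g) (pf f x).
Proof.
apply/ffunP => h; rewrite !ffunE (reindex_inj (mulgI g)) /=.
apply: eq_big => [g'|g' _]; last by rewrite ffunE mulKg.
rewrite f_morph; apply/eqP/eqP; [move=> <-|move=> ->]; by rewrite ?mulKg ?mulKVg.
Qed.

Lemma f1 : f 1%g = 1%g.
Proof.
have := f_morph 1%g 1%g; rewrite mulg1 => H.
by apply: (mulgI (f 1%g)); rewrite mulg1 -H.
Qed.

Lemma fV x : f x^-1%g = (f x)^-1%g.
Proof. by apply: (mulIg (f x)); rewrite -f_morph !mulVg f1. Qed.

End Fib.

Section Tensor.
Variables (gT hT : finGroupType) (f : gT -> hT).
Hypothesis f_morph : {morph f : x y / (x * y)%g}.
Hypothesis f_surj : forall h : hT, exists g : gT, f g = h.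
Variable r : int.
Hypothesis r_coprime : coprime `|r|%N #|gT|.
Variables (T : zmodType) (act : hT -> T -> T) (beta : ZG hT -> ZG gT -> T).
Hypothesis Htens : is_tensor_ZH_Ir f r act beta.

Lemma J0 (kT : finGroupType) : (0 : ZG kT) \in Jb r.
Proof. exact: rpred0. Qed.
Lemma JB (kT : finGroupType) : {in Jb r &, forall u v : ZG kT, u - v \in Jb r}.
Proof. by move=> u v Hu Hv; rewrite rpredB. Qed.

Lemma BD2 a : {in Jb r &, forall u v, beta a (u + v) = beta a u + beta a v}.
Proof. by case: Htens => [[_ H _] _ _ _] u v Hu Hv; apply: H; apply/augIrE. Qed.

Lemma BD1 x : x \in Jb r -> forall a a', beta (a + a') x = beta a x + beta a' x.
Proof. by case: Htens => [[H _ _] _ _ _] Hx a a'; apply: H; apply/augIrE. Qed.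

Lemma Bbal a g x : x \in Jb r -> beta (gr a (f g)) x = beta a (gl g x).
Proof. by case: Htens => [[_ _ H] _ _ _] Hx; apply: H; apply/augIrE. Qed.

Lemma J_gl (kT : finGroupType) (g : kT) x : x \in Jb r -> gl g x \in Jb r.
Proof. by rewrite !inE aug_gl. Qed.

Lemma BK a k y : f k = 1%g -> y \in Jb r -> beta a (gl k y) = beta a y.
Proof. by move=> fk Jy; rewrite -Bbal // fk gr1. Qed.

Lemma Jdd (g g' : gT) : dl g - dl g' \in Jb r.
Proof. by rewrite inE raddfB /= !aug_dl subrr dvdz0. Qed.

Lemma Jdl1r : dl (1%g : gT) *~ r \in Jb r.
Proof. by rewrite inE raddfMz /= aug_dl intz dvdzz. Qed.

Lemma core a k : f k = 1%g -> beta a (dl k - dl 1%g) = 0.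
Proof.
move=> fk; set t := beta a (dl k - dl 1%g).
have Hpow m : beta a (dl (k ^+ m) - dl 1%g) = t *+ m.
  elim: m => [|m IH]; first by rewrite expg0 subrr mulr0n (B0 (@J0 _) (@JB _) (BD2 a)).
  have -> : dl (k ^+ m.+1) - dl 1%g = gl k (dl (k ^+ m) - dl 1%g) + (dl k - dl 1%g).
    by rewrite raddfB /= !gl_dl mulg1 expgS addrA subrK.
  by rewrite BD2 ?J_gl ?Jdd // BK ?Jdd // IH mulrS addrC.
have tn : t *+ #|gT| = 0.
  have := expg_cardG (in_setT k); rewrite cardsT => e.
  by rewrite -Hpow e subrr (B0 (@J0 _) (@JB _) (BD2 a)).
have tr : t *~ r = 0.
  rewrite /t -(Bmulz (@J0 _) (@JB _) (BD2 a)) ?Jdd // mulrzBl.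
  have -> : dl k *~ r = gl k (dl 1%g *~ r) by rewrite raddfMz /= gl_dl mulg1.
  by rewrite (BB (@J0 _) (@JB _) (BD2 a)) ?J_gl ?Jdl1r // BK ?Jdl1r // subrr.
have : coprimez r #|gT|%:Z by rewrite coprimezE absz_nat.
case/coprimezP => [[u v]] /= Huv.
rewrite -[t]mulr1z -Huv mulrzDr [u * _]mulrC [v * _]mulrC !mulrzA tr.
by rewrite -pmulrn tn !mul0rz addr0.
Qed.


Lemma Bfib a g g' : f g = f g' -> beta a (dl g - dl g') = 0.
Proof.
move=> e.
have -> : dl g - dl g' = gl g' (dl (g'^-1 * g)%g - dl 1%g).
  by rewrite raddfB /= !gl_dl mulKVg mulg1.
by rewrite -Bbal ?Jdd // core // f_morph fV // e mulVg.
Qed.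

Lemma Jlift y : y \in Jb r -> lift f y \in Jb r.
Proof. by rewrite !inE aug_lift. Qed.

Lemma Jpf x : x \in Jb r -> pf f x \in Jb r.
Proof. by rewrite !inE aug_pf. Qed.

Lemma Blift a x : x \in Jb r -> beta a x = beta a (lift f (pf f x)).
Proof.
move=> Jx; have Jl := Jlift (Jpf Jx).
apply/eqP; rewrite -subr_eq0 -(BB (@J0 _) (@JB _) (BD2 a)) // decomp //.
rewrite (Bsum (@J0 _) (@JB _) (BD2 a)); last by move=> g; apply: Jdd.
by rewrite big1 // => g _; rewrite Bfib ?sec_f // mul0rz.
Qed.

Definition psi (y : ZG hT) : T := beta (dl 1%g) (lift f y).

Lemma psiD u v : u \in Jb r -> v \in Jb r -> psi (u + v) = psi u + psi v.
Proof. by move=> Ju Jv; rewrite /psi raddfD /= BD2 // Jlift. Qed.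

Lemma E1 a x : x \in Jb r -> psi (cmul a (pf f x)) = beta a x.
Proof.
move=> Jx.
set X := \sum_h gl (sec f h) x *~ a h.
have JX : X \in Jb r by rewrite /X; apply: rpred_sum => h _; rewrite rpredMz // J_gl.
have pfX : pf f X = cmul a (pf f x).
  rewrite /X raddf_sum /cmul; apply: eq_bigr => h _.
  by rewrite raddfMz /= pf_gl // sec_f.
rewrite -pfX /psi -Blift //.
rewrite [in RHS](ffun_decomp a).
have P0 : (0 : ZG hT) \in predT := isT.
have PB : {in predT &, forall u v : ZG hT, u - v \in predT} := fun _ _ _ _ => isT.
have BDx : {in predT &, forall u v, beta (u + v) x = beta u x + beta v x}.
  by move=> u v _ _; apply: BD1.
have -> := Bsum (Bf := fun u => beta u x) P0 PB BDx (F := fun h => dl h) a (fun _ => isT).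
rewrite /X (Bsum (@J0 _) (@JB _) (BD2 _)) => [|h]; last exact: J_gl.
by apply: eq_bigr => h _; rewrite -Bbal // gr_dl mul1g sec_f.
Qed.

Lemma gen (A : zmodType) (p1 p2 : T -> A) :
  {morph p1 : u v / u + v} -> {morph p2 : u v / u + v} ->
  (forall a x, x \in Jb r -> p1 (beta a x) = p2 (beta a x)) -> p1 =1 p2.
Proof.
move=> D1 D2 E.
case: Htens => [[H1 H2 H3] _ _ Hu].
have bal : balanced f r (fun a x => p1 (beta a x)).
  by split => [a a' x Jx|a x x' Jx Jx'|a g x Jx]; rewrite ?H1 ?H2 ?H3 ?D1.
have [phi [_ _ U]] := Hu A _ bal.
move=> t; rewrite (U p1 D1) ?(U p2 D2) // => a x /augIrE Jx.
by rewrite E.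
Qed.


Definition bmap (a : ZG hT) (x : ZG gT) : JT hT r := insubd 0 (cmul a (pf f x)).

Lemma Jcm a x : x \in Jb r -> cmul a (pf f x) \in Jb r.
Proof. by rewrite !inE aug_cmul aug_pf => H; apply: dvdz_mulr. Qed.

Lemma bmapE a x : x \in Jb r -> val (bmap a x) = cmul a (pf f x).
Proof. by move=> Jx; rewrite insubdK // Jcm. Qed.

Lemma bal_b : balanced f r bmap.
Proof.
split => [a a' x /augIrE Jx|a x x' /augIrE Jx /augIrE Jx'|a g x /augIrE Jx];
  apply: val_inj => /=.
- by rewrite !bmapE // cmulDl.
- by rewrite !bmapE ?rpredD // !raddfD.
- by rewrite !bmapE ?J_gl // cmul_gr pf_gl.
Qed.

Lemma main : exists phi : T -> ZG hT,
    [/\ {morph phi : u v / u + v},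
        injective phi,
        (forall t, augIr r (phi t)),
        (forall y, augIr r y -> exists t, phi t = y)
      & forall h t, phi (act h t) = gl h (phi t)].
Proof.
have [phi0 [phi0D phi0E _]] := (let: And4 _ _ _ Hu := Htens in Hu) _ _ bal_b.
have phiE a x : x \in Jb r -> val (phi0 (beta a x)) = cmul a (pf f x).
  by move=> Jx; rewrite phi0E ?bmapE //; apply/augIrE.
have phiD : {morph (fun t => val (phi0 t)) : u v / u + v}.
  by move=> u v /=; rewrite phi0D jvalD.
have psiphi : forall t, psi (val (phi0 t)) = t.
  apply: (gen (p1 := fun t => psi (val (phi0 t))) (p2 := id)) => //.
    by move=> u v /=; rewrite phiD psiD //; apply: valP.
  by move=> a x Jx /=; rewrite phiE // E1.
exists (fun t => val (phi0 t)); split => //.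
- by move=> u v e; rewrite -(psiphi u) -(psiphi v) e.
- by move=> t; apply/augIrE; apply: valP.
- move=> y /augIrE Jy; exists (psi y).
  by rewrite /psi phiE ?Jlift // pf_lift // cmul_dl1.
- move=> h.
  apply: (gen (p1 := fun t => val (phi0 (act h t))) (p2 := fun t => gl h (val (phi0 t)))).
  + by move=> u v /=; case: Htens => [_ Had _ _]; rewrite Had phiD.
  + by move=> u v /=; rewrite phiD raddfD.
  + move=> a x Jx /=; case: Htens => [_ _ Hac _].
    by rewrite -Hac; [rewrite !phiE // gl_cmul | apply/augIrE].
Qed.

End Tensor.

Unset Implicit Arguments.

Theorem lemma3p2 (gT hT : finGroupType) (f : gT -> hT)
  (f_morph : {morph f : x y / (x * y)%g})
  (f_surj : forall h : hT, exists g : gT, f g = h)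
  (r : int) (r_coprime : coprime `|r|%N #|gT|)
  (T : zmodType) (act : hT -> T -> T) (beta : ZG hT -> ZG gT -> T) :
  is_tensor_ZH_Ir f r act beta ->
  exists phi : T -> ZG hT,
    [/\ {morph phi : u v / u + v},
        injective phi,
        (forall t, augIr r (phi t)),
        (forall y, augIr r y -> exists t, phi t = y)
      & forall h t, phi (act h t) = gl h (phi t)].
Proof. move=> Ht; exact: (main f_morph f_surj r_coprime Ht). Qed.
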